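(* For all $\nu\in\mathbb C$ and $x\in\mathbb C\setminus\{0\}$, the following identity holds as formal power series in $t$: $$\sum_{m=0}^\infty (xt)^m R_{m,\nu}(x;q)=\sum_{j=0}^\infty\frac{q^{j\nu}q^{j(j-1)/2}(-t)^j}{(t;q)_{j+1}\,(tx^2;q)_{j+1}}.$$
   Context: Fix $0<q<1$; $(a;q)_0=1$, $(a;q)_k=\prod_{i=0}^{k-1}(1-aq^i)$. The $q$-Lommel functions $R_{m,\nu}(x;q)$ are defined by $R_{-1,\nu}=0$, $R_{0,\nu}=1$ and $R_{m+1,\nu}(x;q)=\big(x+\frac{1-q^\nu}{x}\big)R_{m,\nu+1}(x;q)-R_{m-1,\nu+2}(x;q)$ for $m\ge0$. On the right-hand side each factor $1/(t;q)_{j+1}$, $1/(tx^2;q)_{j+1}$ is expanded as a power series in $t$. *)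

(* Defs.v *)
From mathcomp Require Import all_boot all_order all_algebra.
From mathcomp Require Import all_classical all_reals all_analysis.
From mathcomp Require Import complex.
Import Order.TTheory GRing.Theory Num.Theory ComplexField.

Set Implicit Arguments.
Unset Strict Implicit.
Unset Printing Implicit Defensive.

Local Open Scope ring_scope.
Local Open Scope complex_scope.

Section QLommel.
Variable R : realType.
Local Notation C := R[i].

Definition cpow (q : R) (z : C) : C :=
  let: u +i* v := z in
  let a : R := u * ln q in
  let b : R := v * ln q in
  (expR a * cos b) +i* (expR a * sin b).

(* lommel_pair q x m = (R_{m-1,.}, R_{m,.}) as functions of nu *)
Fixpoint lommel_pair (q : R) (x : C) (m : nat) : (C -> C) * (C -> C) :=
  match m with
  | 0 => (fun _ => 0, fun _ => 1)
  | m'.+1 =>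
      let: (a, b) := lommel_pair q x m' in
      (b, fun nu => (x + (1 - cpow q nu) / x) * b (nu + 1) - a (nu + 2))
  end.

Definition qLommel (q : R) (m : nat) (nu x : C) : C := (lommel_pair q x m).2 nu.

Definition fps := nat -> C.

Definition fps_of_poly (p : {poly C}) : fps := fun n => p`_n.

Definition fps_mul (f g : fps) : fps :=
  fun n => \sum_(k < n.+1) f k * g (n - k)%N.

Fixpoint fps_inv_seq (f : fps) (n : nat) : seq C :=
  match n with
  | 0 => [:: (f 0%N)^-1]
  | n'.+1 =>
      let s := fps_inv_seq f n' in
      rcons s (- (f 0%N)^-1 * \sum_(k < n'.+1) f k.+1 * nth 0 s (n' - k)%N)
  end.

Definition fps_inv (f : fps) : fps := fun n => nth 0 (fps_inv_seq f n) n.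

Definition qpoch_t (a : C) (q : R) (k : nat) : {poly C} :=
  \prod_(i < k) (1 - (a * (q ^+ i)%:C)%:P * 'X).

Definition lhs_series (q : R) (nu x : C) : fps :=
  fun m => x ^+ m * qLommel q m nu x.

(* j-th summand of the right-hand side, without the factor (-t)^j:
   q^{j nu} q^{j(j-1)/2} / ((t;q)_{j+1} (t x^2;q)_{j+1}) *)
Definition rhs_term (q : R) (nu x : C) (j : nat) : fps :=
  fun n => cpow q (j%:R * nu) * (q ^+ (j * (j - 1))./2)%:C *
    fps_mul (fps_inv (fps_of_poly (qpoch_t 1 q j.+1)))
            (fps_inv (fps_of_poly (qpoch_t (x ^+ 2) q j.+1))) n.

(* right-hand side: sum_{j>=0} (-t)^j * rhs_term j ; the j-th summand has
   t-adic order >= j, so the coefficient of t^n only involves j <= n. *)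
Definition rhs_series (q : R) (nu x : C) : fps :=
  fun n => \sum_(j < n.+1) (-1) ^+ j * rhs_term q nu x j (n - j)%N.

End QLommel.

(* Main.v *)
Require Import Defs.
From mathcomp Require Import all_boot all_order all_algebra.
From mathcomp Require Import all_classical all_reals all_analysis.
From mathcomp Require Import complex.
From mathcomp Require Import ring zify.
Import Order.TTheory GRing.Theory Num.Theory ComplexField.
Local Open Scope ring_scope.
Set Implicit Arguments. Unset Strict Implicit.

Section Aux.
Variable R : realType.
Local Notation C := R[i].
Implicit Types f g h : fps R.

Definition tr (n : nat) (f : fps R) : {poly C} := \poly_(i < n.+1) f i.

Lemma tr_coef n f k : (k <= n)%N -> (tr n f)`_k = f k.
Proof. by move=> hk; rewrite /tr coef_poly ltnS hk. Qed.

Lemma fps_mul_poly f g (p r : {poly C}) n :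
  (forall k, (k <= n)%N -> f k = p`_k) -> (forall k, (k <= n)%N -> g k = r`_k) ->
  fps_mul f g n = (p * r)`_n.
Proof.
move=> hf hg; rewrite coefM /fps_mul; apply: eq_bigr => i _.
by rewrite hf ?hg // ?leq_subr // -ltnS.
Qed.

Lemma fps_mulC f g : fps_mul f g = fps_mul g f.
Proof.
apply: funext => n; rewrite (@fps_mul_poly f g (tr n f) (tr n g)).
  by rewrite mulrC -(@fps_mul_poly g f) // => k hk; rewrite tr_coef.
by move=> k hk; rewrite tr_coef. by move=> k hk; rewrite tr_coef.
Qed.

Lemma fps_mulA f g h : fps_mul f (fps_mul g h) = fps_mul (fps_mul f g) h.
Proof.
apply: funext => n.
rewrite (@fps_mul_poly f _ (tr n f) (tr n g * tr n h)); last first.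
- move=> k hk; apply: fps_mul_poly => i hi; rewrite tr_coef //; exact: leq_trans hk.
- by move=> k hk; rewrite tr_coef.
rewrite (@fps_mul_poly _ h (tr n f * tr n g) (tr n h)) ?mulrA //.
- move=> k hk; apply: fps_mul_poly => i hi; rewrite tr_coef //; exact: leq_trans hk.
- by move=> k hk; rewrite tr_coef.
Qed.

Lemma fps_of_polyM (p r : {poly C}) :
  fps_of_poly (p * r) = fps_mul (fps_of_poly p) (fps_of_poly r).
Proof. by apply: funext => n; rewrite (@fps_mul_poly _ _ p r). Qed.

Lemma fps_mul1 f : fps_mul (fps_of_poly 1) f = f.
Proof.
apply: funext => n; rewrite (@fps_mul_poly _ _ 1 (tr n f)) //.
by rewrite mul1r tr_coef.
by move=> k hk; rewrite tr_coef.
Qed.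

Lemma fps_inv_seq_size f n : size (fps_inv_seq f n) = n.+1.
Proof. by elim: n => [|n IH] //=; rewrite size_rcons IH. Qed.

Lemma fps_inv_seq_nth f n k : (k <= n)%N -> nth 0 (fps_inv_seq f n) k = fps_inv f k.
Proof.
elim: n => [|n IH] hk.
  by move: hk; rewrite leqn0 => /eqP ->.
rewrite leq_eqVlt in hk; case/orP: hk => [/eqP -> //| hk].
by rewrite /= nth_rcons fps_inv_seq_size hk IH.
Qed.

Lemma fps_invP f : f 0%N != 0 -> fps_mul f (fps_inv f) = fps_of_poly 1.
Proof.
move=> h0; apply: funext => n; rewrite /fps_of_poly coef1.
case: n => [|n].
  by rewrite /fps_mul big_ord1 /fps_inv /= mulfV.
rewrite /fps_mul big_ord_recl /=.
rewrite subn0.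
have -> : fps_inv f n.+1 = - (f 0%N)^-1 * \sum_(k < n.+1) f k.+1 * fps_inv f (n - k)%N.
  rewrite /fps_inv /= nth_rcons fps_inv_seq_size ltnn eqxx.
  congr (_ * _); apply: eq_bigr => i _; rewrite fps_inv_seq_nth //.
  exact: leq_subr.
under [X in _ + X]eq_bigr => i _ do rewrite /bump /= add1n subSS.
by rewrite mulrA mulrN mulfV // mulN1r addNr.
Qed.

Lemma fps_inv_unique f g h :
  fps_mul f g = fps_of_poly 1 -> fps_mul f h = fps_of_poly 1 -> g = h.
Proof.
move=> hg hh.
by rewrite -[g]fps_mul1 -hh [fps_mul f h]fps_mulC -fps_mulA hg fps_mulC fps_mul1.
Qed.

End Aux.
Arguments tr {R} n f.

Local Open Scope ring_scope.
Local Open Scope complex_scope.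
Set Implicit Arguments. Unset Strict Implicit.
Section S.
Variable R : realType.
Local Notation C := R[i].
Lemma cpowD (q : R) (a b : C) : cpow q (a + b) = cpow q a * cpow q b.
Proof.
case: a => a1 a2; case: b => b1 b2 /=.
rewrite /cpow /= !mulrDl expRD cosD sinD /=.
congr (_ +i* _); ring.
Qed.

Lemma cpow_nat (q : R) n : 0 < q -> cpow q n%:R = (q ^+ n)%:C.
Proof.
move=> hq; elim: n => [|n IH].
  by rewrite /cpow /= !mul0r expR0 cos0 sin0 mulr1 mulr0.
rewrite -addn1 natrD cpowD IH exprD expr1 rmorphM /=; congr (_ * _).
by rewrite /cpow /= mul1r mul0r cos0 sin0 mulr1 mulr0 lnK.
Qed.

Definition sh (f : fps R) : fps R := fun n => if n is n'.+1 then f n' else 0.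

Lemma sh_lin (f g : fps R) (a : C) n :
  sh (fun k => f k - a * g k) n = sh f n - a * sh g n.
Proof. by case: n => [|n] //=; rewrite mulr0 subr0. Qed.

Lemma fps_lin1 (a : C) (f : fps R) :
  fps_mul (fps_of_poly (1 - a%:P * 'X)) f = fun n => f n - a * sh f n.
Proof.
apply: funext => n.
rewrite (@fps_mul_poly R _ _ (1 - a%:P * 'X) (tr n f)) //; last first.
  by move=> k hk; rewrite tr_coef.
rewrite mulrBl mul1r coefB -mulrA coefCM coefXM tr_coef //.
by case: n => [|n] //=; rewrite tr_coef.
Qed.

Lemma qpochS (a : C) (q : R) k :
  qpoch_t a q k.+1 = qpoch_t a q k * (1 - (a * (q ^+ k)%:C)%:P * 'X).
Proof. by rewrite /qpoch_t big_ord_recr. Qed.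

Lemma qpoch_coef0 (a : C) (q : R) k : (qpoch_t a q k)`_0 = 1.
Proof.
rewrite -horner_coef0 /qpoch_t horner_prod big1 // => i _.
by rewrite !hornerE subr0.
Qed.

Definition Aj (q : R) (x : C) (j : nat) : fps R :=
  fps_mul (fps_inv (fps_of_poly (qpoch_t 1 q j.+1)))
          (fps_inv (fps_of_poly (qpoch_t (x ^+ 2) q j.+1))).

Lemma Aj_inv (q : R) (x : C) j :
  fps_mul (fps_of_poly (qpoch_t 1 q j.+1 * qpoch_t (x ^+ 2) q j.+1)) (Aj q x j)
  = fps_of_poly 1.
Proof.
have h1 : forall a, fps_of_poly (qpoch_t a q j.+1) 0%N != 0.
  by move=> a; rewrite /fps_of_poly qpoch_coef0 oner_neq0.
rewrite /Aj fps_of_polyM -fps_mulA.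
set E1 := fps_of_poly _. set E2 := fps_of_poly _.
set I1 := fps_inv E1. set I2 := fps_inv E2.
have h1a := h1 1. have h2a := h1 (x ^+ 2). rewrite [fps_mul I1 I2]fps_mulC (fps_mulA E2) fps_invP //. have H := fps_mul1 I1. by rewrite H fps_invP.
Qed.

Definition Dj (q : R) (x : C) (j : nat) : {poly C} :=
  (1 - (1 * (q ^+ j)%:C)%:P * 'X) * (1 - (x ^+ 2 * (q ^+ j)%:C)%:P * 'X).

Lemma Aj_rec (q : R) (x : C) j :
  fps_mul (fps_of_poly (Dj q x j)) (Aj q x j) =
  if j is j'.+1 then Aj q x j' else fps_of_poly 1.
Proof.
case: j => [|j].
  rewrite -(Aj_inv q x 0) /Dj !qpochS /qpoch_t !big_ord0 !mul1r //.
apply: (@fps_inv_unique R (fps_of_poly (qpoch_t 1 q j.+1 * qpoch_t (x ^+ 2) q j.+1))).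
  rewrite fps_mulA -fps_of_polyM -(Aj_inv q x j.+1); congr (fps_mul (fps_of_poly _) _).
  rewrite /Dj [qpoch_t 1 q j.+2]qpochS [qpoch_t (x ^+ 2) q j.+2]qpochS; ring.
exact: Aj_inv.
Qed.

Lemma Aj_coef (q : R) (x : C) j n :
  Aj q x j n - (1 + x ^+ 2) * (q ^+ j)%:C * sh (Aj q x j) n
    + x ^+ 2 * (q ^+ j)%:C * (q ^+ j)%:C * sh (sh (Aj q x j)) n =
  (if j is j'.+1 then Aj q x j' else fps_of_poly 1) n.
Proof.
rewrite -Aj_rec /Dj fps_of_polyM -fps_mulA !fps_lin1 sh_lin; ring.
Qed.
End S.

Unset Implicit Arguments.
Local Open Scope ring_scope.
Local Open Scope complex_scope.
Section S3.
Variable R : realType.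
Local Notation C := R[i].
Variables (q : R) (x : C).
Hypotheses (hq0 : 0 < q) (hx : x != 0).

Lemma lommel_pair1 m : (lommel_pair q x m.+1).1 = (lommel_pair q x m).2.
Proof. by rewrite /=; case: (lommel_pair q x m). Qed.

Lemma qLommelSS m nu : qLommel q m.+2 nu x =
  (x + (1 - cpow q nu) / x) * qLommel q m.+1 (nu + 1) x - qLommel q m (nu + 2) x.
Proof.
rewrite /qLommel /=.
by case: (lommel_pair q x m).
Qed.

Lemma qLommel1 nu : qLommel q 1 nu x = x + (1 - cpow q nu) / x.
Proof. by rewrite /qLommel /= mulr1 subr0. Qed.

Lemma lhs_rec nu n : lhs_series q nu x n = (n == 0)%:R
  + (1 + x ^+ 2 - cpow q nu) * sh (lhs_series q (nu + 1) x) n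
  - x ^+ 2 * sh (sh (lhs_series q (nu + 2) x)) n.
Proof.
rewrite /lhs_series; case: n => [|[|m]] /=.
- by rewrite expr0 mul1r /qLommel /= !mulr0 addr0 subr0.
- rewrite qLommel1 expr1 expr0 mul1r /qLommel /= mulr1 mulr0 subr0 addrC add0r.
  by field.
- by rewrite qLommelSS !exprS; field.
Qed.

Definition sj (nu : C) (j : nat) : C :=
  (-1) ^+ j * cpow q (j%:R * nu) * (q ^+ (j * (j - 1))./2)%:C.

Definition Uj (nu : C) (j : nat) : fps R :=
  iter j (@sh R) (fun k => sj nu j * Aj q x j k).

Lemma iter_shE j (f : fps R) n :
  iter j (@sh R) f n = if (j <= n)%N then f (n - j)%N else 0.
Proof.
elim: j n => [|j IH] n /=; first by rewrite subn0.
case: n => [|n] //=; by rewrite IH ltnS subSS.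
Qed.

Lemma iter_sh_scale j c (f : fps R) n :
  iter j (@sh R) (fun k => c * f k) n = c * iter j (@sh R) f n.
Proof. by rewrite !iter_shE; case: ifP => //; rewrite mulr0. Qed.

Lemma iter_sh_lin3 j a b (f g h : fps R) n :
  iter j (@sh R) (fun k => f k - a * g k + b * h k) n =
  iter j (@sh R) f n - a * iter j (@sh R) g n + b * iter j (@sh R) h n.
Proof. by rewrite !iter_shE; case: ifP => // _; rewrite !mulr0 subr0 addr0. Qed.

Lemma rhs_U nu n N : (n < N)%N -> rhs_series q nu x n = \sum_(j < N) Uj nu j n.
Proof.
move=> hN; rewrite -(subnKC hN) big_split_ord /= [X in _ = _ + X]big1 ?addr0.
  rewrite /rhs_series; apply: eq_bigr => i _.
  rewrite /Uj iter_shE /= -ltnS ltn_ord /rhs_term /Aj !mulrA //.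
move=> i _; rewrite /Uj iter_shE /=.
by rewrite leqNgt ltnS leq_addr.
Qed.

Lemma sh_sum N (F : fps R) (u : nat -> fps R) :
  (forall n, (n < N)%N -> F n = \sum_(j < N) u j n) ->
  forall n, (n < N)%N -> sh F n = \sum_(j < N) sh (u j) n.
Proof.
move=> H [|n] hn /=; first by rewrite big1.
by apply: H; exact: ltnW.
Qed.

Lemma sj_shift1 nu j : sj (nu + 1) j = sj nu j * (q ^+ j)%:C.
Proof. rewrite /sj mulrDr mulr1 cpowD cpow_nat //; ring. Qed.

Lemma sj_shift2 nu j : sj (nu + 2) j = sj nu j * (q ^+ j)%:C * (q ^+ j)%:C.
Proof.
rewrite /sj.
have -> : j%:R * (nu + 2) = j%:R * nu + j%:R + j%:R :> C by ring.
rewrite !cpowD cpow_nat //; ring.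
Qed.

Lemma half_step j : ((j.+1 * (j.+1 - 1))./2 = (j * (j - 1))./2 + j)%N.
Proof.
rewrite subn1 /=; case: j => [|j] //.
have -> : (j.+2 * j.+1 = j.+1 * (j.+1 - 1) + (j.+1).*2)%N.
  rewrite -muln2; nia.
by rewrite halfD odd_double andbF add0n doubleK.
Qed.

Lemma sjS nu j : sj nu j.+1 = - cpow q nu * sj (nu + 1) j.
Proof.
rewrite sj_shift1 /sj half_step exprD rmorphM /=.
rewrite -addn1 natrD mulrDl mul1r cpowD exprD expr1; ring.
Qed.

Lemma sj0 nu : sj nu 0 = 1.
Proof. by rewrite /sj expr0 mul0r (cpow_nat 0 hq0) !expr0 !mul1r. Qed.

Lemma sh_iter j (F : fps R) : sh (iter j (@sh R) F) = iter j (@sh R) (sh F).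
Proof. by rewrite -iterSr. Qed.

Lemma sh_scale c (f : fps R) : sh (fun k => c * f k) = fun k => c * sh f k.
Proof. by apply: funext => -[|k] //=; rewrite mulr0. Qed.

Lemma Vterm nu j n :
  Uj nu j n - (1 + x ^+ 2) * sh (Uj (nu + 1) j) n + x ^+ 2 * sh (sh (Uj (nu + 2) j)) n
  = if j is j'.+1 then - cpow q nu * sh (Uj (nu + 1) j') n else (n == 0)%:R.
Proof.
have e1 : sh (Uj (nu + 1) j) n = sj nu j * (q ^+ j)%:C * iter j (@sh R) (@sh R (Aj q x j)) n.
  by rewrite /Uj sh_iter sh_scale iter_sh_scale sj_shift1.
have e2 : sh (sh (Uj (nu + 2) j)) n =
   sj nu j * (q ^+ j)%:C * (q ^+ j)%:C * iter j (@sh R) (@sh R (@sh R (Aj q x j))) n.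
  by rewrite /Uj !sh_iter !sh_scale iter_sh_scale sj_shift2.
rewrite e1 e2 /Uj iter_sh_scale.
have -> : forall a b c d e : C, a * b - (1 + x ^+ 2) * (a * d * c) + x ^+ 2 * (a * d * d * e)
   = a * (b - ((1 + x ^+ 2) * d) * c + (x ^+ 2 * d * d) * e) by move=> *; ring.
rewrite -iter_sh_lin3.
have -> : (fun k => Aj q x j k - (1 + x ^+ 2) * (q ^+ j)%:C * sh (Aj q x j) k +
     x ^+ 2 * (q ^+ j)%:C * (q ^+ j)%:C * sh (sh (Aj q x j)) k) =
   (if j is j'.+1 then Aj q x j' else fps_of_poly 1).
  by apply: funext => k; rewrite Aj_coef.
clear e1 e2; case: j => [|j].
  by rewrite sj0 mul1r /= /fps_of_poly coef1.
by rewrite sjS /Uj sh_iter sh_scale iter_sh_scale -sh_iter -mulrA.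
Qed.

Lemma rearr (a b c d e s1 s2 : C) :
  a - b * s1 + d * s2 = e - c * s1 -> a = e + (b - c) * s1 - d * s2.
Proof.
move=> h; have -> : a = (a - b * s1 + d * s2) + b * s1 - d * s2 by ring.
rewrite h; ring.
Qed.

Lemma rhs_rec nu n : rhs_series q nu x n = (n == 0)%:R
  + (1 + x ^+ 2 - cpow q nu) * sh (rhs_series q (nu + 1) x) n
  - x ^+ 2 * sh (sh (rhs_series q (nu + 2) x)) n.
Proof.
have hn2 : (n < n.+2)%N by exact: leqW.
have hA := @rhs_U nu _ _ hn2.
have h1 := @sh_sum _ _ _ (fun m hm => @rhs_U (nu + 1) m _ hm) n hn2.
have h2 := @sh_sum _ _ (fun j => sh (Uj (nu + 2) j)) (@sh_sum _ _ _ (fun m hm => @rhs_U (nu + 2) m _ hm)) n hn2.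
have h1' := @sh_sum n.+1 _ _ (fun m (hm : (m < n.+1)%N) => @rhs_U (nu + 1) m _ hm) n (ltnSn n).
apply: rearr.
rewrite hA h1 h2 !mulr_sumr -sumrB -big_split /=.
under eq_bigr do rewrite Vterm.
rewrite big_ord_recl /= -mulr_sumr -h1'.
by rewrite -mulr_sumr -h1 mulNr.
Qed.

Lemma sh_eq (f g : fps R) n : (forall m, (m < n)%N -> f m = g m) -> sh f n = sh g n.
Proof. by case: n => [|n] //= H; apply: H. Qed.

Lemma main_eq n nu : lhs_series q nu x n = rhs_series q nu x n.
Proof.
elim/ltn_ind: n nu => n IH nu.
rewrite lhs_rec rhs_rec; congr (_ + _ * _ - _ * _).
  by apply: sh_eq => m hm; apply: IH.
apply: sh_eq => m hm; apply: sh_eq => k hk; apply: IH.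
exact: ltn_trans hm.
Qed.
End S3.


Theorem mainTheorem14 (R : realType) (q : R) (hq0 : 0 < q) (hq1 : q < 1)
  (nu x : R[i]) (hx : x != 0) :
  lhs_series q nu x = rhs_series q nu x.
Proof.
apply: funext => n; exact: (@main_eq R q x hq0 hx n nu).
Qed.
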